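(* Assume the model (M.2) and the sub-Gaussian condition (A.4) described in the context, and let Algorithm 2 be applied to $X_1,\ldots,X_N$. For $k\in\{1,\ldots,M_0+1\}$ let $E_{k,N}$ be the event that there exist integers $0\le n_1<n_2<n_3\le N_k$ such that $\{X^{(k)}_n:n=n_1+1,\ldots,n_2\}$ and $\{X^{(k)}_n:n=n_2+1,\ldots,n_3\}$ are two (consecutive) detected segments. Assume $f(N)\ge C\log N$, where $C>16D/c_0$ is a constant. Then $\Pr(\limsup_{N\to\infty}E_{k,N})=0$.
   Context: Model (M.2): for each sample size $N$ one observes independent random vectors $X_1,\ldots,X_N\in\mathbb{R}^D$ ($D\in\mathbb{N}$ fixed). There are $M_0\ge 0$ (fixed) change points $0=L_0<L_1<\cdots<L_{M_0}<L_{M_0+1}=N$ (depending on $N$), with segment sizes $N_k=L_k-L_{k-1}$, $N_k\to\infty$; for each $k$, $X_{L_{k-1}+1},\ldots,X_{L_k}$ are i.i.d. with distribution $\mathcal{G}_k$ with mean $\mu_k$ and finite covariance; $\mu_k\neq\mu_{k+1}$. Write $X^{(k)}_n=X_{L_{k-1}+n}$, $n=1,\ldots,N_k$. (A.4): there is $c_0>0$ such that for every $k$, coordinate $d$, $n\ge1$ and $a>0$, the mean $\bar Z$ of $n$ i.i.d. copies of the $d$-th marginal of $\mathcal{G}_k$ satisfies $\Pr(|\bar Z-E\bar Z|\ge a)\le2e^{-c_0a^2n}$. Quadratic loss: $\mathrm{Loss}_q(x_a,\ldots,x_b)=\sum_{n=a}^b|x_n-\bar x|^2$, $\bar x$ the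 sample mean. Algorithm 2 (inputs $M_{\max}\ge1$, penalty $f(N)>0$, minimal segment size $\beta(N)$): for $k=0,1,\ldots,M_{\max}$ compute $\hat e_k=\min\sum_{j=1}^{k+1}\mathrm{Loss}_q(x_{\ell_{j-1}+1},\ldots,x_{\ell_j})$ over $0=\ell_0<\ell_1<\cdots<\ell_{k+1}=N$ with a minimizer; if its smallest segment has size $<\beta(N)$, set $M=k-1$ and stop (else $M=M_{\max}$). Output $\hat M=\arg\min_{0\le k\le M}(\hat e_k+kf(N))$ and the change points $\hat\ell_1<\cdots<\hat\ell_{\hat M}$ of the minimizer for $k=\hat M$. The detected segments are the blocks $\{X_n:n=\hat\ell_{j-1}+1,\ldots,\hat\ell_j\}$, $j=1,\ldots,\hat M+1$ ($\hat\ell_0=0,\hat\ell_{\hat M+1}=N$); two detected segments are consecutive if they are neighbors. $\limsup_N E_N$ is the event that $E_N$ occurs for infinitely many $N$. *)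

(* Defs.v *)
From HB Require Import structures.
From mathcomp Require Import all_boot all_order all_algebra.
From mathcomp Require Import all_classical all_reals all_analysis.
Set Implicit Arguments. Unset Strict Implicit. Unset Printing Implicit Defensive.
Import Order.TTheory GRing.Theory Num.Theory.
Local Open Scope classical_set_scope.
Local Open Scope ring_scope.

(* Data: x : nat -> 'I_D -> R, where x n d is the d-th coordinate of   *)
(* the n-th observation x_n in R^D (observations indexed 1..N).         *)
Section Algorithm.
Variables (R : realType) (D : nat).

Definition seg_mean (x : nat -> 'I_D -> R) (a b : nat) (d : 'I_D) : R :=
  (\sum_(a <= n < b) x n.+1 d) / (b - a)%:R.

Definition loss_q (x : nat -> 'I_D -> R) (a b : nat) : R :=
  \sum_(a <= n < b) \sum_(d < D) (x n.+1 d - seg_mean x a b d) ^+ 2.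

(* a segmentation with k change points l_1 < ... < l_k of {1..N} is
   a seq s = [:: l_1; ...; l_k] with 0 < l_1 < ... < l_k < N.
   Its full boundary list is 0 = l_0, l_1, ..., l_k, l_{k+1} = N. *)
Definition boundaries (N : nat) (s : seq nat) : seq nat := 0%N :: rcons s N.

Definition valid_seg (N : nat) (s : seq nat) : bool := path ltn 0%N (rcons s N).

Definition seg_pairs (N : nat) (s : seq nat) : seq (nat * nat) :=
  zip (0%N :: s) (rcons s N).

Definition seg_cost (x : nat -> 'I_D -> R) (N : nat) (s : seq nat) : R :=
  \sum_(p <- seg_pairs N s) loss_q x p.1 p.2.

Definition min_seg_size (N : nat) (s : seq nat) : nat :=
  foldr minn N [seq (p.2 - p.1)%N | p <- seg_pairs N s].

(* A tie-breaking rule for the minimisation step: for every sample size N,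
   data x and number k < N of change points, [sel N x k] is a minimiser of
   the total loss among all segmentations with k change points. *)
Definition partition_selector
    (sel : nat -> (nat -> 'I_D -> R) -> nat -> seq nat) : Prop :=
  forall N x k, (k < N)%N ->
    [/\ valid_seg N (sel N x k), size (sel N x k) = k &
        forall s, valid_seg N s -> size s = k ->
          seg_cost x N (sel N x k) <= seg_cost x N s].

(* A tie-breaking rule for the arg min step: for any nonempty list of reals,
   [am v] is an index of a minimal entry. *)
Definition argmin_selector (am : seq R -> nat) : Prop :=
  forall v : seq R, v != [::] ->
    (am v < size v)%N /\ forall i, (i < size v)%N -> v`_(am v) <= v`_i.

(* Algorithm 2, with inputs Mmax, penalty fN = f(N), minimal segment
   size betaN = beta(N), and tie-breaking rules sel and am.
   Step k fails (and the loop stops with M = k - 1) if the minimiser has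
   a segment of size < betaN; we also stop if no segmentation with k
   change points exists (k >= N). *)
Definition alg2_M (sel : nat -> (nat -> 'I_D -> R) -> nat -> seq nat)
    (Mmax : nat) (betaN : nat) (N : nat) (x : nat -> 'I_D -> R) : nat :=
  let bad k := (N <= k)%N || (min_seg_size N (sel N x k) < betaN)%N in
  (find bad (iota 0 Mmax.+1)).-1.

Definition alg2_Mhat (sel : nat -> (nat -> 'I_D -> R) -> nat -> seq nat)
    (am : seq R -> nat) (Mmax : nat) (fN : R) (betaN : nat) (N : nat)
    (x : nat -> 'I_D -> R) : nat :=
  am [seq seg_cost x N (sel N x k) + k%:R * fN
     | k <- iota 0 (alg2_M sel Mmax betaN N x).+1].

Definition alg2_cps (sel : nat -> (nat -> 'I_D -> R) -> nat -> seq nat)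
    (am : seq R -> nat) (Mmax : nat) (fN : R) (betaN : nat) (N : nat)
    (x : nat -> 'I_D -> R) : seq nat :=
  sel N x (alg2_Mhat sel am Mmax fN betaN N x).

Definition consecutive_detected (cps : seq nat) (N a b c : nat) : Prop :=
  exists j, [/\ (j.+2 < size (boundaries N cps))%N,
    nth 0%N (boundaries N cps) j = a,
    nth 0%N (boundaries N cps) j.+1 = b &
    nth 0%N (boundaries N cps) j.+2 = c].

End Algorithm.

Section Prob.
Variables (d : measure_display) (T : measurableType d) (R : realType) (D : nat).

Definition vec_event (Y : 'I_D -> T -> R) (B : 'I_D -> set R) : set T :=
  [set w | forall i, B i (Y i w)].

(* Mutual independence of the random vectors Y_n (n in S), checked on the
   generating pi-systems {Y_n in B_1 x ... x B_D} of the sigma-algebras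
   sigma(Y_n): product rule over every finite subfamily. *)
Definition mutually_independent_vectors (P : probability T R)
    (Y : nat -> 'I_D -> T -> R) (S : nat -> Prop) : Prop :=
  forall (s : seq nat) (B : nat -> 'I_D -> set R),
    uniq s -> (forall n, n \in s -> S n) ->
    (forall n i, measurable (B n i)) ->
    fine (P (\bigcap_(n in [set n | n \in s]) vec_event (Y n) (B n)))
    = \prod_(n <- s) fine (P (vec_event (Y n) (B n))).

(* the random vectors Y and Y' have the same distribution (on rectangles,
   a pi-system generating the Borel sets of R^D) *)
Definition same_law_vectors (P : probability T R) (Y Y' : 'I_D -> T -> R) : Prop :=
  forall B : 'I_D -> set R, (forall i, measurable (B i)) ->
    P (vec_event Y B) = P (vec_event Y' B).

Definition limsup_event (E : nat -> set T) : set T :=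
  [set w | forall m, exists2 N, (m <= N)%N & E N w].

End Prob.

(* Main.v *)
Require Import Defs.
From HB Require Import structures.
From mathcomp Require Import all_boot all_order all_algebra.
From mathcomp Require Import all_classical all_reals all_analysis.
From mathcomp Require Import measurable_realfun measurable_fun_approximation.
From mathcomp Require Import lra ring zify.
Import Order.TTheory GRing.Theory Num.Theory.
Local Open Scope classical_set_scope.
Local Open Scope ring_scope.


Section Det.
Variables (R : realType) (D : nat).

Fixpoint chain_cost (g : nat -> nat -> R) (h : nat) (l : seq nat) : R :=
  match l with [::] => 0 | y :: l' => g h y + chain_cost g y l' end.

Lemma chain_cat g h p l :
  chain_cost g h (p ++ l) = chain_cost g h p + chain_cost g (last h p) l.
Proof. by elim: p h => [|y p IH] h /=; rewrite ?add0r // IH addrA. Qed.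

Lemma seg_costE (x : nat -> 'I_D -> R) N s :
  seg_cost x N s = chain_cost (loss_q x) 0 (rcons s N).
Proof.
rewrite /seg_cost /seg_pairs; elim: s 0%N => [|y s IH] h /=.
  by rewrite big_cons big_nil /= !addr0.
by rewrite big_cons /= IH.
Qed.

Lemma nth_lastc (h : nat) p r : nth 0%N (h :: p ++ r) (size p) = last h p.
Proof. by elim: p h => [|y p IH] h //=. Qed.

Lemma alg2_M_lt sel Mmax betaN N (x : nat -> 'I_D -> R) k :
  (0 < N)%N -> (k <= alg2_M sel Mmax betaN N x)%N -> (k < N)%N.
Proof.
move=> N0; rewrite /alg2_M.
set bad := (fun k => _).
have := find_size bad (iota 0 Mmax.+1); rewrite size_iota.
case E: (find _ _) => [|i] /=.
  by move=> _; rewrite leqn0 => /eqP ->.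
move=> iM ki.
have : (k < find bad (iota 0 Mmax.+1))%N by rewrite E ltnS.
move/(before_find 0%N); rewrite nth_iota; last by apply: leq_ltn_trans iM.
by rewrite add0n /bad => /negbT; rewrite negb_or -ltnNge => /andP[].
Qed.

Lemma det_main (sel : nat -> (nat -> 'I_D -> R) -> nat -> seq nat) am Mmax fN
    betaN N (x : nat -> 'I_D -> R) a b c :
  partition_selector sel -> argmin_selector am -> (0 < N)%N ->
  consecutive_detected (alg2_cps sel am Mmax fN betaN N x) N a b c ->
  fN <= loss_q x a c - loss_q x a b - loss_q x b c.
Proof.
move=> Hsel Ham N0 [j [Hj Ha Hb Hc]].
move: Hj Ha Hb Hc; rewrite /alg2_cps.
set M := alg2_M sel Mmax betaN N x.
have hM := @alg2_M_lt sel Mmax betaN N x _ N0.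
rewrite /alg2_Mhat -/M.
set v := [seq _ | _ <- _].
have vn : v != [::] by rewrite /v -size_eq0 size_map size_iota.
have [Mhv Mhmin] := Ham v vn.
set Mh := am v in Mhv Mhmin *.
have sv : size v = M.+1 by rewrite size_map size_iota.
have MhN : (Mh < N)%N by apply: hM; rewrite -ltnS -sv.
have [Vc Sc Oc] := Hsel N x Mh MhN.
set cps := sel N x Mh in Vc Sc Oc *.
rewrite /boundaries /= size_rcons !ltnS => jc.
have jMh : (j < Mh)%N by rewrite -Sc.
have cpsE : cps = take j cps ++ nth 0%N cps j :: drop j.+1 cps.
  by rewrite -drop_nth // cat_take_drop.
set p := take j cps in cpsE *; set q := drop j.+1 cps in cpsE *.
have sp : size p = j by rewrite size_take jc.
set bj := nth 0%N cps j in cpsE *.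
rewrite cpsE rcons_cat rcons_cons -!sp nth_lastc => Ha.
rewrite nth_cat ltnn subnn /= => Hb.
rewrite nth_cat ltnNge leqnSn /= subSn // subnn /= => Hc.
have qc : rcons q N = c :: behead (rcons q N).
  by rewrite -Hc; case: (q).
pose s' := p ++ q.
have Vs' : valid_seg N s'.
  move: Vc; rewrite /valid_seg cpsE /s' !rcons_cat !cat_path rcons_cons Ha qc.
  rewrite /= => /andP[-> /and3P[ab bc ->]]; rewrite andbT.
  by rewrite (ltn_trans ab bc).
have Ss' : size s' = Mh.-1.
  by rewrite /s' size_cat -Sc cpsE size_cat /= addnS.
have Mh1 : (Mh.-1 < N)%N by apply: leq_ltn_trans (leq_pred _) MhN.
have [_ _ O'] := Hsel N x Mh.-1 Mh1.
have hle := O' s' Vs' Ss'.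
have hv := Mhmin Mh.-1 (leq_ltn_trans (leq_pred _) Mhv).
have m1 : (Mh < M.+1)%N by rewrite -sv.
have m2 : (Mh.-1 < M.+1)%N by apply: leq_ltn_trans (leq_pred _) m1.
move: hv; rewrite /v !(nth_map 0%N) ?size_iota //.
rewrite !nth_iota ?add0n //.
rewrite -/cps => hv.
have ec : seg_cost x N cps = seg_cost x N s' - loss_q x a c
   + loss_q x a b + loss_q x b c.
  rewrite !seg_costE cpsE /s' !rcons_cat rcons_cons !chain_cat Ha qc /=.
  rewrite Hb; lra.
have Mh1E : Mh%:R = (Mh.-1)%:R + 1 :> R.
  by rewrite natr1 prednK // (leq_ltn_trans _ jMh).
move: hv; rewrite ec Mh1E; lra.
Qed.

End Det.


Section Bias.
Variables (R : realType) (D : nat).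

Lemma bias_coord (y : nat -> R) a b m : (a < b)%N ->
  \sum_(a <= n < b) (y n - m) ^+ 2 =
  \sum_(a <= n < b) (y n - (\sum_(a <= i < b) y i) / (b - a)%:R) ^+ 2
  + (b - a)%:R * ((\sum_(a <= i < b) y i) / (b - a)%:R - m) ^+ 2.
Proof.
move=> ab.
set s := \sum_(a <= i < b) y i.
set mean := s / (b - a)%:R.
have e : forall n, (y n - m) ^+ 2 = (y n - mean) ^+ 2 + (2 * (mean - m)) * y n
   + ((mean - m) ^+ 2 - 2 * (mean - m) * mean) by move=> n; ring.
rewrite (eq_bigr _ (fun n _ => e n)) !big_split /= -mulr_sumr !sumr_const_nat.
rewrite -/s.
have n0 : (b - a)%:R != 0 :> R by rewrite pnatr_eq0 subn_eq0 -ltnNge.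
have sE : s = mean * (b - a)%:R by rewrite /mean mulfVK.
clearbody mean; rewrite sE; move: (b - a)%N => k; ring.
Qed.

Lemma bias_vec (x : nat -> 'I_D -> R) a b (m : 'I_D -> R) : (a < b)%N ->
  \sum_(a <= n < b) \sum_(d < D) (x n.+1 d - m d) ^+ 2 =
  loss_q x a b + \sum_(d < D) (b - a)%:R * (seg_mean x a b d - m d) ^+ 2.
Proof.
move=> ab; rewrite /loss_q exchange_big [X in _ = X + _]exchange_big -big_split.
by apply: eq_bigr => d _ /=; rewrite /seg_mean bias_coord.
Qed.

Definition Qb (x : nat -> 'I_D -> R) (m : 'I_D -> R) a b :=
  \sum_(d < D) (b - a)%:R * (seg_mean x a b d - m d) ^+ 2.

Lemma inc_bound (x : nat -> 'I_D -> R) m a b c : (a < b)%N -> (b < c)%N ->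
  loss_q x a c - loss_q x a b - loss_q x b c <= Qb x m a b + Qb x m b c.
Proof.
move=> ab bc.
have ac : (a < c)%N by apply: ltn_trans bc.
have h1 := @bias_vec x a c m ac.
have h2 := @bias_vec x a b m ab.
have h3 := @bias_vec x b c m bc.
rewrite (@big_cat_nat _ _ _ b) /= ?(ltnW ab) ?(ltnW bc) // in h1.
have q0 : 0 <= Qb x m a c.
  by apply: sumr_ge0 => d _; rewrite mulr_ge0 ?sqr_ge0.
rewrite /Qb in q0 *; lra.
Qed.

End Bias.
Arguments Qb {R D}.



Section Meas.
Context (R : realType) (dT : measure_display) (T : measurableType dT)
  (P : probability T R) (D : nat).

Lemma meas_ge (g : T -> R) t : measurable_fun setT g ->
  measurable [set w | t <= g w].
Proof.
move=> mg; have := mg measurableT _ (measurable_itv `[t, +oo[).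
rewrite setTI; congr measurable; apply/seteqP; split => w /=;
  by rewrite in_itv /= andbT.
Qed.

Lemma meas_bigU (I : Type) (s : seq I) (F : I -> set T) :
  (forall i, measurable (F i)) -> measurable (\big[setU/set0]_(i <- s) F i).
Proof.
move=> mF; elim: s => [|i s IH]; first by rewrite big_nil.
by rewrite big_cons; apply: measurableU.
Qed.

Arguments meas_bigU {I} s F.

Lemma measure_bigU (I : Type) (s : seq I) (F : I -> set T) :
  (forall i, measurable (F i)) ->
  (P (\big[setU/set0]_(i <- s) F i) <= \sum_(i <- s) P (F i))%E.
Proof.
move=> mF; elim: s => [|i s IH]; first by rewrite !big_nil measure0.
rewrite !big_cons; apply: le_trans (measureU2 P (mF i) (meas_bigU s F mF)) _.
exact: leeD2l.
Qed.

Arguments measure_bigU {I} s F.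

Lemma sum_cst_seq (I : Type) (s : seq I) (c : R) :
  \sum_(i <- s) c = (size s)%:R * c.
Proof.
elim: s => [|i s IH]; first by rewrite big_nil mul0r.
by rewrite big_cons IH /= -natr1 mulrDl mul1r addrC.
Qed.

Definition Sset (X : nat -> 'I_D -> T -> R) (m : 'I_D -> R) (tau : R)
    (a b : nat) (d : 'I_D) : set T :=
  [set w | Num.sqrt (tau / (b - a)%:R) <=
     `|(\sum_(n <- iota a.+1 (b - a)) X n d w) / (size (iota a.+1 (b - a)))%:R
       - m d|].

Definition Fset (X : nat -> 'I_D -> T -> R) (m : 'I_D -> R) (tau : R)
    (lo hi Nn : nat) : set T :=
  \big[setU/set0]_(a <- iota 0 Nn.+1) \big[setU/set0]_(b <- iota 0 Nn.+1)
   \big[setU/set0]_(d <- enum 'I_D)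
     (if [&& (lo <= a)%N, (a < b)%N & (b <= hi)%N] then Sset X m tau a b d
      else set0).

Lemma Sset_meas X m tau a b d : (forall n i, measurable_fun setT (X n i)) ->
  measurable (Sset X m tau a b d).
Proof.
move=> mX; apply: meas_ge.
apply: measurableT_comp; first exact: normr_measurable.
apply: measurable_funB; last exact: measurable_cst.
apply: measurable_funM; last exact: measurable_cst.
by apply: measurable_sum => n; exact: mX.
Qed.

Lemma Fset_meas X m tau lo hi Nn : (forall n i, measurable_fun setT (X n i)) ->
  measurable (Fset X m tau lo hi Nn).
Proof.
move=> mX; apply: meas_bigU => a; apply: meas_bigU => b; apply: meas_bigU => d.
by case: ifP => _ //; exact: Sset_meas.
Qed.

Lemma Fset_bound X m tau lo hi Nn (e : R) :
  (forall n i, measurable_fun setT (X n i)) -> 0 <= e ->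
  (forall a b d, (lo <= a)%N -> (a < b)%N -> (b <= hi)%N ->
     (P (Sset X m tau a b d) <= e%:E)%E) ->
  (P (Fset X m tau lo hi Nn) <= ((Nn.+1)%:R * (Nn.+1)%:R * D%:R * e)%:E)%E.
Proof.
move=> mX e0 hS.
apply: le_trans (measure_bigU _ _ _) _.
  move=> a; apply: meas_bigU => b; apply: meas_bigU => d.
  by case: ifP => _ //; exact: Sset_meas.
have h1 : forall a, (P (\big[setU/set0]_(b <- iota 0 Nn.+1)
   \big[setU/set0]_(d <- enum 'I_D)
     (if [&& (lo <= a)%N, (a < b)%N & (b <= hi)%N] then Sset X m tau a b d
      else set0)) <= ((Nn.+1)%:R * D%:R * e)%:E)%E.
  move=> a; apply: le_trans (measure_bigU _ _ _) _.
    move=> b; apply: meas_bigU => d.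
    by case: ifP => _ //; exact: Sset_meas.
  have h2 : forall b, (P (\big[setU/set0]_(d <- enum 'I_D)
     (if [&& (lo <= a)%N, (a < b)%N & (b <= hi)%N] then Sset X m tau a b d
      else set0)) <= (D%:R * e)%:E)%E.
    move=> b; apply: le_trans (measure_bigU _ _ _) _.
      by move=> d; case: ifP => _ //; exact: Sset_meas.
    apply: (@le_trans _ _ (\sum_(d <- enum 'I_D) e%:E)%E).
      apply: lee_sum => d _.
      case: ifP => [/and3P[h h' h'']|_]; first exact: hS.
      by rewrite measure0 lee_fin.
    by rewrite sumEFin sum_cst_seq size_enum_ord.
  apply: (@le_trans _ _ (\sum_(b <- iota 0 Nn.+1) (D%:R * e)%:E)%E).
    by apply: lee_sum => b _; exact: h2.
  by rewrite sumEFin sum_cst_seq size_iota !mulrA.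
apply: (@le_trans _ _ (\sum_(a <- iota 0 Nn.+1) ((Nn.+1)%:R * D%:R * e)%:E)%E).
  by apply: lee_sum => a _; exact: h1.
by rewrite sumEFin sum_cst_seq size_iota !mulrA.
Qed.

Lemma Fset_mem X m tau lo hi Nn a b d w :
  (lo <= a)%N -> (a < b)%N -> (b <= hi)%N -> (hi <= Nn)%N ->
  Sset X m tau a b d w -> Fset X m tau lo hi Nn w.
Proof.
move=> la ab bh hN hS.
have aN : (a < Nn.+1)%N by rewrite ltnS (leq_trans (ltnW ab)) // (leq_trans bh).
have bN : (b < Nn.+1)%N by rewrite ltnS (leq_trans bh).
rewrite /Fset.
have memU : forall (I : eqType) (s : seq I) (F : I -> set T) i,
    i \in s -> F i w -> (\big[setU/set0]_(j <- s) F j) w.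
  move=> I s F i; elim: s => [//|j s IH]; rewrite in_cons big_cons.
  case/orP => [/eqP <- Fi|/IH h /h]; [by left|by right].
apply: (memU _ _ _ a); first by rewrite mem_iota.
apply: (memU _ _ _ b); first by rewrite mem_iota.
apply: (memU _ _ _ d); first by rewrite mem_enum.
by rewrite la ab bh.
Qed.

End Meas.
Arguments Sset {R dT T D}.
Arguments Fset {R dT T D}.



Section Num.
Variable R : realType.

Definition wt (i : nat) : R := (i%:R * i.+1%:R)^-1.

Lemma wt_ge0 i : 0 <= wt i.
Proof. by rewrite /wt invr_ge0 mulr_ge0. Qed.

Lemma wsum m : \sum_(0 <= i < m.+1) wt i = 1 - (m.+1%:R)^-1.
Proof.
elim: m => [|m IH].
  by rewrite big_nat1 /wt mul0r invr0 invr1 subrr.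
rewrite big_nat_recr //= IH /wt.
have h1 : m.+1%:R != 0 :> R by rewrite pnatr_eq0.
have h2 : m.+2%:R != 0 :> R by rewrite pnatr_eq0.
rewrite -[m.+2%:R]natr1 -[m.+1%:R]natr1 in h1 h2 *.
field.
by rewrite h1 h2.
Qed.

Lemma series_bound (u : nat -> \bar R) (K : R) :
  (forall n, (0 <= u n)%E) -> (forall n, (u n <= (K * wt n)%:E)%E) -> 0 <= K ->
  (\sum_(n <oo) u n < +oo)%E.
Proof.
move=> u0 uK K0.
apply: le_lt_trans (ltry K).
apply: le_trans (lee_nneseries (fun i _ _ => u0 i) (fun n _ => uK n)) _.
apply: lime_le.
  by apply: is_cvg_nneseries => n _ _; rewrite lee_fin mulr_ge0 // wt_ge0.
apply: nearW => n; rewrite sumEFin lee_fin -mulr_sumr.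
case: n => [|m]; first by rewrite big_geq // mulr0.
rewrite wsum; rewrite ler_piMr // lerBlDr lerDl invr_ge0 //.
Qed.

Lemma expR_bound (c0 C : R) (D N : nat) : 0 < c0 -> (0 < D)%N ->
  16 * D%:R / c0 < C -> (1 <= N)%N ->
  expR (- (c0 * (C * ln N%:R / (2 * D%:R)))) <= (N%:R ^+ 8)^-1.
Proof.
move=> c00 D0 hC N1.
have Dp : 0 < D%:R :> R by rewrite ltr0n.
have Np : 0 < N%:R :> R by rewrite ltr0n.
have l0 : 0 <= ln (N%:R : R) by rewrite ln_ge0 // ler1n.
have e8 : (N%:R ^+ 8)^-1 = expR (- (8%:R * ln (N%:R : R))).
  by rewrite expRN expRM_natl lnK // posrE.
rewrite e8 ler_expR lerN2.
have hc : 16 * D%:R < C * c0 by rewrite -ltr_pdivrMr.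
rewrite mulrA ler_pdivlMr ?mulr_gt0 //.
have : 8%:R * ln N%:R * (2 * D%:R) = (16 * D%:R) * ln (N%:R : R) by rewrite -natrM; ring.
move=> ->; rewrite mulrA [c0 * C]mulrC.
by apply: ler_wpM2r => //; apply: ltW.
Qed.

Lemma poly_bound (N : nat) (D : R) : (1 <= N)%N -> 0 <= D ->
  N.+1%:R * N.+1%:R * D * (2 * (N%:R ^+ 8)^-1) <= (16 * D) * wt N.
Proof.
move=> N1 D0.
have hn : (N.+1 ^ 3 <= 8 * N ^ 7)%N.
  have h1 : (N.+1 ^ 3 <= (2 * N) ^ 3)%N by rewrite leq_exp2r //; lia.
  apply: leq_trans h1 _; rewrite expnMn leq_mul2l /=.
  by apply: leq_pexp2l.
have hr : (N.+1%:R : R) ^+ 3 <= 8 * N%:R ^+ 7.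
  by rewrite -!natrX -natrM ler_nat.
have Np : 0 < N%:R :> R by rewrite ltr0n.
have N1p : 0 < N.+1%:R :> R by rewrite ltr0n.
rewrite /wt mulrA ler_pdivlMr ?mulr_gt0 //.
rewrite mulrAC ler_pdivrMr ?exprn_gt0 //.
have : N.+1%:R * N.+1%:R * D * 2 * (N%:R * N.+1%:R) = 2 * D * (N%:R * N.+1%:R ^+ 3) :> R by ring.
move=> ->.
have : 16 * D * N%:R ^+ 8 = 2 * D * (N%:R * (8 * N%:R ^+ 7)) :> R by ring.
move=> ->.
apply: ler_wpM2l; first by rewrite mulr_ge0.
by apply: ler_wpM2l; [exact: ltW|].
Qed.

End Num.

Section Extra.
Variables (R : realType) (D : nat).

Lemma pigeon (g1 g2 : 'I_D -> R) t : (0 < D)%N ->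
  2 * D%:R * t <= \sum_(d < D) g1 d + \sum_(d < D) g2 d ->
  exists d, t <= g1 d \/ t <= g2 d.
Proof.
move=> D0 hs.
case: (pselect (exists d, t <= g1 d \/ t <= g2 d)) => // hn.
have h1 : forall d, g1 d < t.
  by move=> d; rewrite ltNge; apply/negP => hd; apply: hn; exists d; left.
have h2 : forall d, g2 d < t.
  by move=> d; rewrite ltNge; apply/negP => hd; apply: hn; exists d; right.
have hpos : has predT (index_enum 'I_D).
  by apply/hasP; exists (Ordinal D0); rewrite ?mem_index_enum.
have s1 := @ltr_sum _ _ (index_enum 'I_D) predT g1 (fun _ => t) hpos (fun d _ => h1 d).
have s2 := @ltr_sum _ _ (index_enum 'I_D) predT g2 (fun _ => t) hpos (fun d _ => h2 d).
move: s1 s2; rewrite sumr_const card_ord -mulr_natl => s1 s2.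
exfalso; move: hs; lra.
Qed.

Lemma Lmono (g : nat -> nat) M : (forall j, (j <= M)%N -> (g j < g j.+1)%N) ->
  forall i j, (i <= j)%N -> (j <= M.+1)%N -> (g i <= g j)%N.
Proof.
move=> hg i; elim=> [|j IH]; first by rewrite leqn0 => /eqP ->.
rewrite leq_eqVlt => /orP[/eqP -> //|]; rewrite ltnS => ij jM.
apply: leq_trans (IH ij (ltnW jM)) (ltnW (hg j _)).
by rewrite -ltnS.
Qed.

End Extra.

Section Extra2.
Context (R : realType) (dT : measure_display) (T : measurableType dT) (D : nat).

Lemma Sset_of (X : nat -> 'I_D -> T -> R) m tau a b d w : (a < b)%N ->
  tau <= (b - a)%:R * (seg_mean (fun n i => X n i w) a b d - m d) ^+ 2 ->
  Sset X m tau a b d w.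
Proof.
move=> ab h; rewrite /Sset /= size_iota.
rewrite (_ : \sum_(n <- _) _ = \sum_(a.+1 <= i < b.+1) X i d w); last first.
  by rewrite /index_iota subSS.
rewrite big_add1 /=.
move: h; rewrite /seg_mean /= => h.
rewrite -sqrtr_sqr ler_sqrt ?sqr_ge0 // ler_pdivrMr ?ltr0n ?subn_gt0 // mulrC.
exact: h.
Qed.

End Extra2.

Theorem lemma4 (R : realType) (dT : measure_display) (T : measurableType dT)
    (P : probability T R) (D M0 : nat)
    (X : nat -> nat -> 'I_D -> T -> R) (L : nat -> nat -> nat)
    (mu : nat -> 'I_D -> R) (c0 : R)
    (Mmax : nat) (f : nat -> R) (beta : nat -> nat) (C : R)
    (sel : nat -> (nat -> 'I_D -> R) -> nat -> seq nat) (am : seq R -> nat)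
    (k : nat) :
  (0 < D)%N ->
  (* (M.2): change points 0 = L_0 < L_1 < ... < L_{M0+1} = N *)
  (forall N, (M0 < N)%N ->
     [/\ L N 0%N = 0%N, L N M0.+1 = N &
         forall j, (j <= M0)%N -> (L N j < L N j.+1)%N]) ->
  (* segment sizes N_j -> oo *)
  (forall j, (1 <= j <= M0.+1)%N -> forall B : nat,
     exists N0, forall N, (N0 <= N)%N -> (B <= L N j - L N j.-1)%N) ->
  (* X N n i = i-th coordinate of X_n in the sample of size N *)
  (forall N n i, measurable_fun setT (X N n i)) ->
  (* independence of X_1, ..., X_N *)
  (forall N, (M0 < N)%N ->
     mutually_independent_vectors P (X N) [set n | (1 <= n <= N)%N]) ->
  (* within segment j the X_n have a common distribution G_j (independent of N) *)
  (forall j N N' n n', (M0 < N)%N -> (M0 < N')%N -> (1 <= j <= M0.+1)%N ->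
     (L N j.-1 < n <= L N j)%N -> (L N' j.-1 < n' <= L N' j)%N ->
     same_law_vectors P (X N n) (X N' n')) ->
  (* G_j has mean mu_j and finite covariance *)
  (forall j N n i, (M0 < N)%N -> (1 <= j <= M0.+1)%N ->
     (L N j.-1 < n <= L N j)%N ->
     [/\ P.-integrable setT (EFin \o X N n i),
         P.-integrable setT (EFin \o (fun w => X N n i w ^+ 2)) &
         (\int[P]_w (X N n i w)%:E = (mu j i)%:E)%E]) ->
  (forall j, (1 <= j <= M0)%N -> exists i, mu j i != mu j.+1 i) ->
  (* (A.4): sub-Gaussian concentration of means of i.i.d. copies *)
  0 < c0 ->
  (forall j N i (s : seq nat) (a : R), (M0 < N)%N -> (1 <= j <= M0.+1)%N ->
     uniq s -> s != [::] -> (forall n, n \in s -> (L N j.-1 < n <= L N j)%N) ->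
     0 < a ->
     (P [set w | (a <= `| (\sum_(n <- s) X N n i w) / (size s)%:R - mu j i |)%R]
      <= (2 * expR (- (c0 * a ^+ 2 * (size s)%:R)))%:E)%E) ->
  (* inputs of Algorithm 2 *)
  (1 <= Mmax)%N ->
  (forall N, 0 < f N) ->
  16 * D%:R / c0 < C ->
  (forall N, C * ln N%:R <= f N) ->
  partition_selector sel -> argmin_selector am ->
  (1 <= k <= M0.+1)%N ->
  P.-negligible (limsup_event (fun N => [set w |
     exists n1 n2 n3, (n1 < n2 < n3)%N /\ (n3 <= L N k - L N k.-1)%N /\
       consecutive_detected
         (alg2_cps sel am Mmax (f N) (beta N) N (fun n i => X N n i w))
         N (L N k.-1 + n1) (L N k.-1 + n2) (L N k.-1 + n3)])).
Proof.
Proof.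
move=> D0 HL Hsz Hmeas Hind Hlaw Hmom Hmu c00 HA4 Mm1 fpos hC hf Hsel Ham hk.
pose lo N := L N k.-1.
pose hi N := L N k.
pose tau (N : nat) : R := C * ln (N%:R : R) / (2 * D%:R).
pose N1 := maxn M0.+1 2.
pose G N := if (N1 <= N)%N then Fset (X N) (mu k) (tau N) (lo N) (hi N) N
            else set0.
have Dp : 0 < D%:R :> R by rewrite ltr0n.
have Cp : 0 < C.
  by apply: lt_trans hC; rewrite divr_gt0 // mulr_gt0 // ltr0n.
have hN1 : forall N, (N1 <= N)%N -> (M0 < N)%N /\ (2 <= N)%N.
  by move=> N; rewrite geq_max => /andP[].
have hlh : forall N, (N1 <= N)%N -> (lo N < hi N)%N /\ (hi N <= N)%N.
  move=> N /hN1 [MN _]; have [_ LM Lc] := HL N MN.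
  move: hk => /andP[k1 kM].
  split; first by rewrite /lo /hi -{2}(prednK k1) Lc // -ltnS prednK.
  by have := @Lmono _ _ Lc _ _ kM (leqnn _); rewrite LM.
have taup : forall N, (N1 <= N)%N -> 0 < tau N.
  by move=> N /hN1 [_ N2]; rewrite /tau divr_gt0 ?mulr_gt0 // ln_gt0 // ltr1n.
have mG : forall N, measurable (G N).
  move=> N; rewrite /G; case: ifP => _ //; exact: Fset_meas.
have Sb : forall N a b d, (N1 <= N)%N -> (lo N <= a)%N -> (a < b)%N -> (b <= hi N)%N ->
    (P (Sset (X N) (mu k) (tau N) a b d) <= (2 * expR (- (c0 * tau N)))%:E)%E.
  move=> N a b d hN la ab bh.
  have [MN _] := hN1 N hN.
  have t0 := taup N hN.
  have ba : (0 < b - a)%N by rewrite subn_gt0.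
  have ba' : (b - a)%:R != 0 :> R by rewrite pnatr_eq0 -lt0n.
  have s1 : iota a.+1 (b - a) != [::] by rewrite -size_eq0 size_iota -lt0n.
  have s2 : forall n, n \in iota a.+1 (b - a) -> (L N k.-1 < n <= L N k)%N.
    move=> n; rewrite mem_iota => /andP[h1 h2]; move: la bh; rewrite /lo /hi.
    lia.
  have s3 : 0 < Num.sqrt (tau N / (b - a)%:R).
    by rewrite sqrtr_gt0 divr_gt0 // ltr0n.
  have h := HA4 k N d (iota a.+1 (b - a)) (Num.sqrt (tau N / (b - a)%:R)) MN hk
    (iota_uniq _ _) s1 s2 s3.
  apply: le_trans h _.
  have tb : 0 <= tau N / (b - a)%:R by rewrite divr_ge0 // ltW.
  by rewrite lee_fin size_iota sqr_sqrtr // -mulrA divfK.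
have Gb : forall N, (P (G N) <= ((16 * D%:R) * wt R N)%:E)%E.
  move=> N; rewrite /G; case: ifP => hN; last first.
    by rewrite measure0 lee_fin mulr_ge0 ?wt_ge0 // mulr_ge0 // ler0n.
  have [MN N2] := hN1 N hN.
  have e0 : 0 <= 2 * expR (- (c0 * tau N)) by rewrite mulr_ge0 // ltW // expR_gt0.
  have := @Fset_bound _ _ _ P D (X N) (mu k) (tau N) (lo N) (hi N) N
     (2 * expR (- (c0 * tau N))) (Hmeas N) e0 (fun a b d => Sb N a b d hN).
  move=> hF; apply: le_trans hF _.
  rewrite lee_fin.
  have N0 : (0 < N)%N by apply: leq_trans N2.
  apply: le_trans (@poly_bound R N D%:R N0 (ler0n _ _)).
  rewrite ler_wpM2l ?mulr_ge0 ?ler0n // ler_wpM2l //.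
  by apply: expR_bound => //; apply: leq_trans N2.
have GE : forall N w, (N1 <= N)%N -> (fun N => [set w |
     exists n1 n2 n3, (n1 < n2 < n3)%N /\ (n3 <= L N k - L N k.-1)%N /\
       consecutive_detected
         (alg2_cps sel am Mmax (f N) (beta N) N (fun n i => X N n i w))
         N (L N k.-1 + n1) (L N k.-1 + n2) (L N k.-1 + n3)]) N w -> G N w.
  move=> N w hN [n1 [n2 [n3 [/andP[h12 h23] [h3 hcd]]]]].
  have [MN N2] := hN1 N hN.
  have [lh hN'] := hlh N hN.
  have N0 : (0 < N)%N by apply: leq_trans N2.
  have hdet := @det_main _ _ _ _ _ _ _ _ _ _ _ _ Hsel Ham N0 hcd.
  set x := (fun n i => X N n i w) in hdet.
  set a := (L N k.-1 + n1)%N in hdet *.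
  set b := (L N k.-1 + n2)%N in hdet *.
  set c := (L N k.-1 + n3)%N in hdet *.
  have ab : (a < b)%N by rewrite ltn_add2l.
  have bc : (b < c)%N by rewrite ltn_add2l.
  have hinc := @inc_bound _ _ x (mu k) a b c ab bc.
  have hfN := hf N.
  have e2 : C * ln (N%:R : R) = 2 * D%:R * tau N.
    by rewrite /tau [RHS]mulrC divfK // mulf_neq0 // gt_eqF.
  have hsum : 2 * D%:R * tau N <= Qb x (mu k) a b + Qb x (mu k) b c.
    by rewrite -e2; lra.
  have [d [hd|hd]] := @pigeon _ _
     (fun d => (b - a)%:R * (seg_mean x a b d - mu k d) ^+ 2)
     (fun d => (c - b)%:R * (seg_mean x b c d - mu k d) ^+ 2) (tau N) D0 hsum.
  - rewrite /G hN.
    apply: (@Fset_mem _ _ _ _ (X N) (mu k) (tau N) (lo N) (hi N) N a b d w) => //.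
    + by rewrite /a /lo leq_addr.
    + by move: h3 h23 lh; rewrite /b /lo /hi; lia.
    + exact: (@Sset_of _ _ _ _ (X N) (mu k) (tau N) a b d w ab hd).
  - rewrite /G hN.
    apply: (@Fset_mem _ _ _ _ (X N) (mu k) (tau N) (lo N) (hi N) N b c d w) => //.
    + by rewrite /b /lo leq_addr.
    + by move: h3 h23 lh; rewrite /c /lo /hi; lia.
    + exact: (@Sset_of _ _ _ _ (X N) (mu k) (tau N) b c d w bc hd).
exists (lim_sup_set G); split.
- by apply: bigcapT_measurable => n; apply: bigcup_measurable => j _.
- apply: lim_sup_set_cvg0 => //.
  apply: (@series_bound _ _ (16 * D%:R)) => //.
- move=> w hw n _.
  have [N hN hE] := hw (maxn n N1).
  exists N; first by move: hN; rewrite geq_max => /andP[].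
  by apply: GE => //; move: hN; rewrite geq_max => /andP[].
Qed.
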